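(* Let $m\ge0$, let $f:\mathbb{R}^n\to\mathbb{R}$ be $m$-weakly convex, and consider one call of the subroutine ProxDescent$(x_k,\beta,\rho)$ (defined in the context) with $\beta\in(0,1)$, $\rho>0$, $\alpha=m+\rho$. Let $\Delta_k:=f(x_k)-f_\alpha(x_k)$ and assume $\Delta_k>0$. Then the while-loop terminates after finitely many steps, and the number $T_k$ of trial points computed satisfies $$T_k\le\frac{8G_k^2}{(1-\beta)^2\rho\,\Delta_k},\qquad\text{where } G_k=\max_{1\le j\le T_k}\|g_j\|.$$
   Context: A function $f$ is $m$-weakly convex ($m\ge 0$) if $x\mapsto f(x)+\frac{m}{2}\|x\|^2$ is convex; its subdifferential is $\partial f(x)=\{v: f(y)\ge f(x)+\langle v,y-x\rangle-\frac{m}{2}\|y-x\|^2\ \forall y\}$. For $\alpha>m$, $f_\alpha(x)=\inf_y\{f(y)+\frac\alpha2\|y-x\|^2\}$ (Moreau envelope). Subroutine ProxDescent$(x_k,\beta,\rho)$: set $j=1$, choose $g_1\in\partial f(x_k)$, let $\tilde f_1(x)=f(x_k)+\langle g_1,x-x_k\rangle$, and compute $z_2=\arg\min_x\{\tilde f_1(x)+\frac\rho2\|x-x_k\|^2\}$. While $f(x_k)-\big(f(z_{j+1})+\frac m2\|z_{j+1}-x_k\|^2\big)<\beta\big(f(x_k)-\tilde f_j(z_{j+1})\big)$: choose $g_{j+1}$ with $g_{j+1}-m(z_{j+1}-x_k)\in\partial f(z_{j+1})$ and a convex $\tilde f_{j+1}:\mathbb{R}^n\to\mathbb{R}$ such that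 for all $x$: (i) $\tilde f_{j+1}(x)\le f(x)+\frac m2\|x-x_k\|^2$; (ii) $\tilde f_{j+1}(x)\ge\tilde f_j(z_{j+1})+\langle s_{j+1},x-z_{j+1}\rangle$ with $s_{j+1}=\rho(x_k-z_{j+1})$; (iii) $\tilde f_{j+1}(x)\ge f(z_{j+1})+\frac m2\|z_{j+1}-x_k\|^2+\langle g_{j+1},x-z_{j+1}\rangle$; compute $z_{j+2}=\arg\min_x\{\tilde f_{j+1}(x)+\frac\rho2\|x-x_k\|^2\}$ and increase $j$ by one. On exit, return $z_{j+1}$. $T_k$ denotes the number of trial points $z_2,\dots,z_{T_k+1}$ computed in the call (equivalently the number of vectors $g_1,\dots,g_{T_k}$ used). *)

(* Defs.v *)
From HB Require Import structures.
From mathcomp Require Import all_boot all_order all_algebra.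
From mathcomp Require Import all_classical all_reals.
Set Implicit Arguments. Unset Strict Implicit. Unset Printing Implicit Defensive.
Import Order.TTheory GRing.Theory Num.Theory.
Local Open Scope ring_scope.
Local Open Scope classical_set_scope.

Section Defs.
Variables (R : realType) (n : nat).
Notation V := 'rV[R]_n.

Definition dotp (u v : V) : R := \sum_(i < n) u ord0 i * v ord0 i.
Definition nrm (u : V) : R := Num.sqrt (dotp u u).

Definition convex_fun (h : V -> R) : Prop :=
  forall (x y : V) (t : R), 0 <= t <= 1 ->
    h (t *: x + (1 - t) *: y) <= t * h x + (1 - t) * h y.

Definition weakly_convex (m : R) (f : V -> R) : Prop :=
  convex_fun (fun x => f x + m / 2 * nrm x ^+ 2).

Definition subdiff (m : R) (f : V -> R) (x v : V) : Prop :=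
  forall y, f x + dotp v (y - x) - m / 2 * nrm (y - x) ^+ 2 <= f y.

Definition moreau (f : V -> R) (alpha : R) (x : V) : R :=
  inf [set f y + alpha / 2 * nrm (y - x) ^+ 2 | y in [set: V]].

Definition is_prox_min (F : V -> R) (rho : R) (xk z : V) : Prop :=
  forall x, F z + rho / 2 * nrm (z - xk) ^+ 2 <= F x + rho / 2 * nrm (x - xk) ^+ 2.

Definition loop_cont (f : V -> R) (m beta : R) (xk : V)
    (ft : nat -> V -> R) (z : nat -> V) (j : nat) : Prop :=
  f xk - (f (z j.+1) + m / 2 * nrm (z j.+1 - xk) ^+ 2)
    < beta * (f xk - ft j (z j.+1)).

(* (g, ft, z) is a (possibly infinite) execution of ProxDescent(xk, beta, rho):
   the choices at step j+1 are constrained only while the loop is still running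
   (the loop condition held at every index 1..j). *)
Definition prox_descent_run (f : V -> R) (m beta rho : R) (xk : V)
    (g : nat -> V) (ft : nat -> V -> R) (z : nat -> V) : Prop :=
  [/\ subdiff m f xk (g 1%N),
      (forall x, ft 1%N x = f xk + dotp (g 1%N) (x - xk)),
      is_prox_min (ft 1%N) rho xk (z 2%N) &
      forall j : nat, (1 <= j)%N ->
        (forall i : nat, (1 <= i <= j)%N -> loop_cont f m beta xk ft z i) ->
        subdiff m f (z j.+1) (g j.+1 - m *: (z j.+1 - xk)) /\
        convex_fun (ft j.+1) /\
        (forall x, ft j.+1 x <= f x + m / 2 * nrm (x - xk) ^+ 2) /\
        (forall x, ft j (z j.+1) + dotp (rho *: (xk - z j.+1)) (x - z j.+1)
                     <= ft j.+1 x) /\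
        (forall x, f (z j.+1) + m / 2 * nrm (z j.+1 - xk) ^+ 2
                     + dotp (g j.+1) (x - z j.+1) <= ft j.+1 x) /\
        is_prox_min (ft j.+1) rho xk (z j.+2)].

End Defs.

(* Main.v *)
Require Import Defs.
From HB Require Import structures.
From mathcomp Require Import all_boot all_order all_algebra.
From mathcomp Require Import all_classical all_reals.
From mathcomp Require Import ring lra.
Import Order.TTheory GRing.Theory Num.Theory.
Local Open Scope ring_scope.

Section Aux.
Context {R : realType} {n : nat}.
Notation V := 'rV[R]_n.
Implicit Types (u v w x y : V).

Lemma dotpDl u v w : dotp (u + v) w = dotp u w + dotp v w.
Proof. by rewrite /dotp -big_split; apply: eq_bigr => i _; rewrite mxE mulrDl. Qed.
Lemma dotpZl (a : R) u w : dotp (a *: u) w = a * dotp u w.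
Proof. by rewrite /dotp mulr_sumr; apply: eq_bigr => i _; rewrite mxE mulrA. Qed.
Lemma dotpNl u w : dotp (- u) w = - dotp u w.
Proof. by rewrite /dotp -sumrN; apply: eq_bigr => i _; rewrite mxE mulNr. Qed.
Lemma dotpC u w : dotp u w = dotp w u.
Proof. by rewrite /dotp; apply: eq_bigr => i _; rewrite mulrC. Qed.
Lemma dotpDr u v w : dotp w (u + v) = dotp w u + dotp w v.
Proof. by rewrite dotpC dotpDl !(dotpC w). Qed.
Lemma dotpZr (a : R) u w : dotp w (a *: u) = a * dotp w u.
Proof. by rewrite dotpC dotpZl dotpC. Qed.
Lemma dotpNr u w : dotp w (- u) = - dotp w u.
Proof. by rewrite dotpC dotpNl dotpC. Qed.
Lemma dotp_ge0 u : 0 <= dotp u u.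
Proof. by rewrite /dotp; apply: sumr_ge0 => i _; rewrite -expr2 sqr_ge0. Qed.
Lemma nrm2 u : nrm u ^+ 2 = dotp u u.
Proof. by rewrite /nrm sqr_sqrtr // dotp_ge0. Qed.
Lemma nrm_ge0 u : 0 <= nrm u.
Proof. by rewrite /nrm sqrtr_ge0. Qed.

Definition dotpE := (dotpDl, dotpDr, dotpNl, dotpNr, dotpZl, dotpZr).

Lemma lin_quad (A B : R) : 0 <= B -> (forall t, 0 < t <= 1 -> 0 <= t * A + t ^+ 2 * B) -> 0 <= A.
Proof.
move=> B0 H; rewrite leNgt; apply/negP => A0.
have [B00|Bp] := eqVneq B 0.
  by have := H 1; rewrite ltr01 lexx B00 /= => /(_ isT); lra.
have Bp' : 0 < B by rewrite lt_def Bp B0.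
pose t := Num.min 1 (- A / (2 * B)).
have t0 : 0 < t by rewrite lt_min ltr01 /= divr_gt0 //; lra.
have t1 : t <= 1 by rewrite ge_min lexx.
have t2 : t <= - A / (2 * B) by rewrite ge_min lexx orbT.
have := H t; rewrite t0 t1 => /(_ isT).
have : t * (2 * B) <= - A by rewrite -ler_pdivlMr // mulr_gt0.
nra.
Qed.

Lemma prox_first_order (F : V -> R) (rho : R) xk z :
  0 < rho -> convex_fun F -> is_prox_min F rho xk z ->
  forall x, F z + rho * dotp (xk - z) (x - z) <= F x.
Proof.
move=> r0 cF pm x.
suff : 0 <= F x - F z - rho * dotp (xk - z) (x - z) by lra.
apply: (@lin_quad _ (rho / 2 * dotp (x - z) (x - z))).
  by apply: mulr_ge0; [lra| apply: dotp_ge0].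
move=> t /andP[t0 t1].
have := cF x z t; rewrite (ltW t0) t1 => /(_ isT).
have := pm (t *: x + (1 - t) *: z).
rewrite !nrm2 !dotpE.
have e1 := dotpC x z; have e2 := dotpC x xk; have e3 := dotpC z xk.
move=> h1 h2.
rewrite ?(dotpC z x) ?(dotpC xk x) ?(dotpC xk z) in h1 h2 *.
lra.
Qed.

Lemma jensen_max (psi : V -> R) (K : R) : convex_fun psi ->
  forall (s : seq (R * V)) (mu : R) (c : V),
  0 <= mu -> psi c <= K -> (forall p, p \in s -> 0 <= p.1 /\ psi p.2 <= K) ->
  mu + \sum_(p <- s) p.1 = 1 ->
  psi (mu *: c + \sum_(p <- s) p.1 *: p.2) <= K.
Proof.
move=> cP; elim=> [|[l q] s IH] mu c mu0 hc hs hsum.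
  by move: hsum; rewrite !big_nil !addr0 => ->; rewrite scale1r.
rewrite big_cons /= in hsum; rewrite big_cons /=.
have [/= l0 /= hq] := hs (l, q) (mem_head _ _).
have hs' : forall p, p \in s -> 0 <= p.1 /\ psi p.2 <= K.
  by move=> p ps; apply: hs; rewrite in_cons ps orbT.
rewrite addrA.
have [e|ne] := eqVneq (mu + l) 0.
  have mu00 : mu = 0 by lra.
  have l00 : l = 0 by lra.
  have -> : mu *: c + l *: q = 0 *: c by rewrite mu00 l00 !scale0r addr0.
  by apply: IH => //; rewrite mu00 l00 !add0r in hsum; rewrite add0r.
have mp : 0 < mu + l by rewrite lt_def ne /=; lra.
pose c' := (mu / (mu + l)) *: c + (l / (mu + l)) *: q.
have ec : mu *: c + l *: q = (mu + l) *: c' by rewrite /c' scalerDr !scalerA !(mulrC (mu + l)) !divfK.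
rewrite ec; apply: IH => //; last by rewrite -addrA.
  by lra.
have h1 : 1 - mu / (mu + l) = l / (mu + l) by field; lra.
have a0 : 0 <= mu / (mu + l) by rewrite divr_ge0 //; lra.
have b0 : 0 <= l / (mu + l) by rewrite divr_ge0 //; lra.
have a1 : mu / (mu + l) <= 1 by lra.
have := cP c q (mu / (mu + l)).
rewrite h1 a0 a1 => /(_ isT) h.
apply: (le_trans h).
have e1 : mu / (mu + l) + l / (mu + l) = 1 by field; lra.
have p1 : mu / (mu + l) * psi c <= mu / (mu + l) * K by apply: ler_wpM2l.
have p2 : l / (mu + l) * psi q <= l / (mu + l) * K by apply: ler_wpM2l.
have : mu / (mu + l) * K + l / (mu + l) * K = K by rewrite -mulrDl e1 mul1r.
lra.
Qed.

Lemma coord_le (d : V) i : d 0 i ^+ 2 <= dotp d d.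
Proof.
rewrite /dotp (bigD1 i) //= expr2 lerDl; apply: sumr_ge0 => j _.
by rewrite -expr2 sqr_ge0.
Qed.

Lemma convex_bounded (psi : V -> R) (c : V) (r : R) : convex_fun psi ->
  exists K, forall x, dotp (x - c) (x - c) <= r -> psi x <= K.
Proof.
move=> cP.
pose C := n%:R * (1 + `|r|) + 1.
have C0 : 0 < C by rewrite /C; have := normr_ge0 r; have : (0 <= n%:R :> R) by []; nra.
exists (\big[Num.max/psi c]_(i < n) Num.max (psi (c + C *: 'e_i)) (psi (c + (-C) *: 'e_i))).
move=> x hx.
pose d := x - c.
have xe : x = c + d by rewrite /d addrC subrK.
pose w i := `|d 0 i| / C.
pose sg (i : 'I_n) := if 0 <= d 0 i then C else - C.
pose q i := c + sg i *: 'e_i.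
have hdi i : `|d 0 i| <= 1 + `|r|.
  have := coord_le d i; rewrite -/d => h.
  have h2 : d 0 i ^+ 2 <= `|r| by apply: le_trans h (le_trans hx (ler_norm r)).
  have : `|d 0 i| ^+ 2 = d 0 i ^+ 2 by rewrite real_normK // num_real.
  have := normr_ge0 (d 0 i); nra.
have sw : \sum_(i < n) w i <= 1.
  rewrite /w -mulr_suml ler_pdivrMr // mul1r.
  apply: le_trans (ler_sum _ (fun i _ => hdi i)) _.
  by rewrite sumr_const card_ord -mulr_natl /C lerDl.
have ws i : w i * sg i = d 0 i.
  rewrite /w /sg; case: ifP => h.
    rewrite ger0_norm //; field; exact: lt0r_neq0.
  rewrite ltr0_norm ?ltNge ?h //; field; exact: lt0r_neq0.
have xe2 : x = (1 - \sum_(i < n) w i) *: c + \sum_(i < n) w i *: q i.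
  have qe i : w i *: q i = w i *: c + d 0 i *: 'e_i by rewrite /q /= scalerDr scalerA ws.
  rewrite (eq_bigr _ (fun i _ => qe i)).
  rewrite big_split /= -scaler_suml addrA -scalerDl subrK scale1r.
  by rewrite -row_sum_delta.
rewrite xe2.
have -> : \sum_(i < n) w i *: q i = \sum_(p <- [seq (w i, q i) | i <- index_enum 'I_n]) p.1 *: p.2.
  by rewrite big_map.
apply: jensen_max => //.
- by lra.
- exact: bigmax_ge_id.
- move=> p /mapP [i _ ->] /=; split; first by rewrite /w divr_ge0 // ltW.
  apply: le_trans (le_bigmax _ _ i); rewrite le_max /q /sg.
  by case: ifP => _; rewrite lexx ?orbT.
- by rewrite big_map /= subrK.
Qed.

Lemma quad_lower (y w : V) (rho lam : R) : 0 < rho ->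
  - (lam ^+ 2 * dotp w w) <= 2 * rho * (lam * dotp w y + rho / 2 * dotp y y).
Proof.
move=> hr; have := dotp_ge0 (rho *: y + lam *: w).
rewrite !dotpE (dotpC y w); lra.
Qed.

Lemma ww_bound (g' d : V) (rho : R) :
  dotp (g' + rho *: d) (g' + rho *: d) <= 2 * dotp g' g' + 2 * (rho ^+ 2 * dotp d d).
Proof.
have := dotp_ge0 (g' - rho *: d).
rewrite !dotpE (dotpC d g'); lra.
Qed.

Lemma fin_scalar (rho G2 gp gp' lam E ww c : R) : 0 < rho -> 0 < G2 -> 0 <= gp -> 0 <= c ->
  lam = c * rho * gp / (4 * G2) -> c * gp <= E -> ww <= 4 * G2 ->
  2 * rho * lam * E - lam ^+ 2 * ww <= 2 * rho * (gp - gp') ->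
  8 * G2 * gp' <= 8 * G2 * gp - c ^+ 2 * rho * gp ^+ 2.
Proof.
move=> r0 G0 gp0 c0 hl hE hw H.
have l0 : 0 <= lam by rewrite hl divr_ge0 ?mulr_ge0 //; lra.
have a : 2 * rho * lam * (c * gp) <= 2 * rho * lam * E.
  by apply: ler_wpM2l => //; rewrite !mulr_ge0 //; lra.
have b : lam ^+ 2 * ww <= lam ^+ 2 * (4 * G2) by apply: ler_wpM2l => //; exact: sqr_ge0.
have key : 2 * rho * lam * (c * gp) - lam ^+ 2 * (4 * G2) = c ^+ 2 * rho ^+ 2 * gp ^+ 2 / (4 * G2).
  by rewrite hl; field; lra.
have H2 : c ^+ 2 * rho ^+ 2 * gp ^+ 2 / (4 * G2) <= 2 * rho * (gp - gp') by lra.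
rewrite ler_pdivrMr in H2; last by lra.
have H3 : rho * (c ^+ 2 * rho * gp ^+ 2) <= rho * (8 * G2 * (gp - gp')) by lra.
rewrite ler_pM2l // in H3; lra.
Qed.

Lemma step_scalar (K P gp gp' j : R) : 0 < K -> 0 <= P -> 0 <= j -> 0 <= P * gp -> P * gp <= K ->
  j * (P * gp) <= K -> K * gp' <= K * gp - P * gp ^+ 2 -> (j + 1) * P * gp' <= K.
Proof.
move=> K0 P0 j0 X0 XK jX H.
have h1 : 0 <= (K - j * (P * gp)) * (K - P * gp) by apply: mulr_ge0; lra.
have h2 : (j + 1) * P * (K * gp') <= (j + 1) * P * (K * gp - P * gp ^+ 2).
  by apply: ler_wpM2l => //; apply: mulr_ge0 => //; lra.
have h3 : K * ((j + 1) * P * gp') <= K * K by nra.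
by rewrite ler_pM2l in h3.
Qed.

Lemma le_1sq (x : R) : x <= 1 + x ^+ 2.
Proof. have := sqr_ge0 (x - 1 / 2); nra. Qed.

Lemma dotp_lb (a d : V) : - (dotp a a + dotp d d) / 2 <= dotp a d.
Proof. have := dotp_ge0 (a + d); rewrite !dotpE (dotpC d a); lra. Qed.

End Aux.

Section Main.
Variables (R : realType) (n : nat) (m : R) (f : 'rV[R]_n -> R)
    (beta rho : R) (xk : 'rV[R]_n)
    (g : nat -> 'rV[R]_n) (ft : nat -> 'rV[R]_n -> R) (z : nat -> 'rV[R]_n).
Hypotheses (hm : 0 <= m) (hb : 0 < beta < 1) (hr : 0 < rho)
  (run : prox_descent_run f m beta rho xk g ft z)
  (hD : 0 < f xk - moreau f (m + rho) xk) (hwc : weakly_convex m f).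

Definition phi x := f x + m / 2 * nrm (x - xk) ^+ 2.
Definition vv j := ft j (z j.+1) + rho / 2 * nrm (z j.+1 - xk) ^+ 2.
Definition gap j := f xk - vv j.
Definition valid j := (1 <= j)%N /\ forall i, (1 <= i < j)%N -> loop_cont f m beta xk ft z i.
Definition gg1 := dotp (g 1) (g 1).

Lemma valid_facts j : valid j ->
  [/\ forall x, ft j x <= phi x, convex_fun (ft j) & is_prox_min (ft j) rho xk (z j.+1)].
Proof.
have [sub1 ft1 pm1 step] := run.
case: j => [[//]|[|k]] [_ hl].
  split => //.
  - move=> x; rewrite ft1 /phi; have := sub1 x; lra.
  - move=> x y t _; rewrite !ft1 !dotpE.
    rewrite ?(dotpC x (g 1)) ?(dotpC y (g 1)) ?(dotpC xk (g 1)); lra.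
have [_ [cv [le1 [_ [_ pm]]]]] := step k.+1 isT (fun i hi => hl i hi).
by split => // x; rewrite /phi; apply: le1.
Qed.


Lemma nrm_sub0 (x : 'rV[R]_n) : nrm (x - x) ^+ 2 = 0.
Proof. by rewrite nrm2 subrr /dotp big1 // => i _; rewrite mxE mul0r. Qed.

Lemma v_le_M j : valid j -> vv j <= moreau f (m + rho) xk.
Proof.
move=> /valid_facts [le1 _ pm]; apply: lb_le_inf.
  by exists (f xk + (m + rho) / 2 * nrm (xk - xk) ^+ 2); exists xk.
move=> s [y _ <-].
have := pm y; have := le1 y; rewrite /phi /vv; lra.
Qed.

Lemma gap_ge j : valid j -> f xk - moreau f (m + rho) xk <= gap j.
Proof. move=> /v_le_M; rewrite /gap; lra. Qed.

Lemma first_order j : valid j ->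
  ft j (z j.+1) + rho * dotp (xk - z j.+1) (xk - z j.+1) <= f xk.
Proof.
move=> /valid_facts [le1 cv pm].
have := @prox_first_order R n (ft j) rho xk (z j.+1) hr cv pm xk; have := le1 xk.
rewrite /phi nrm_sub0; lra.
Qed.

Lemma valid_prev j : (1 <= j)%N -> valid j.+1 -> valid j.
Proof.
move=> j1 [_ hl]; split => // i /andP [i1 ij]; apply: hl; rewrite i1 /=.
exact: ltn_trans ij _.
Qed.

Lemma step_at j : (1 <= j)%N -> valid j.+1 ->
  (forall x, ft j (z j.+1) + dotp (rho *: (xk - z j.+1)) (x - z j.+1) <= ft j.+1 x) /\
  (forall x, f (z j.+1) + m / 2 * nrm (z j.+1 - xk) ^+ 2
                     + dotp (g j.+1) (x - z j.+1) <= ft j.+1 x).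
Proof.
move=> j1 [_ hl]; have [_ _ _ step] := run.
have [_ [_ [_ [h2 [h3 _]]]]] := step j j1 (fun i hi => hl i hi).
by split.
Qed.

Lemma loop_at j : (1 <= j)%N -> valid j.+1 -> loop_cont f m beta xk ft z j.
Proof. by move=> j1 [_ hl]; apply: hl; rewrite j1 ltnSn. Qed.

Lemma mono j : (1 <= j)%N -> valid j.+1 -> vv j <= vv j.+1.
Proof.
move=> j1 vj; have [h2 _] := step_at j j1 vj.
have := h2 (z j.+2).
have := mulr_ge0 (ltW hr) (dotp_ge0 (z j.+2 - z j.+1)).
rewrite /vv !nrm2 !dotpE.
rewrite ?(dotpC (z j.+1) xk) ?(dotpC (z j.+2) xk) ?(dotpC (z j.+2) (z j.+1)).
lra.
Qed.

Lemma gap1 : 2 * rho * gap 1 <= gg1.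
Proof.
have [_ ft1 _ _] := run.
have := dotp_ge0 (g 1 + rho *: (z 2 - xk)).
rewrite /gap /vv /gg1 ft1 !nrm2 !dotpE.
rewrite ?(dotpC (z 2) xk) ?(dotpC (z 2) (g 1)) ?(dotpC xk (g 1)).
lra.
Qed.

Lemma gap_le j : valid j -> 2 * rho * gap j <= gg1.
Proof.
elim: j => [[//]|j IH vj].
case: j IH vj => [_ _|j IH vj]; first exact: gap1.
apply: le_trans (IH (valid_prev j.+1 isT vj)).
have h := mono j.+1 isT vj.
have h' : gap j.+2 <= gap j.+1 by rewrite /gap; lra.
have p : 0 <= 2 * rho :> R by rewrite mulr_ge0 // ltW.
by rewrite -subr_ge0 -mulrBr mulr_ge0 // subr_ge0.
Qed.

Lemma s_bound j : valid j -> rho ^+ 2 * dotp (xk - z j.+1) (xk - z j.+1) <= gg1.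
Proof.
case: j => [[//]|[|k]] vj.
  have h1 := first_order 1 vj.
  have [_ ft1 _ _] := run.
  rewrite ft1 in h1.
  have h2 := dotp_ge0 (g 1 - rho *: (xk - z 2)).
  have h3 : rho * (rho * dotp (xk - z 2) (xk - z 2)) <= rho * dotp (g 1) (xk - z 2).
    apply: ler_wpM2l; first exact: ltW.
    move: h1; rewrite !dotpE; rewrite ?(dotpC (z 2) xk) ?(dotpC xk (g 1)) ?(dotpC (z 2) (g 1)).
    lra.
  move: h2 h3; rewrite /gg1 !dotpE.
  rewrite ?(dotpC (z 2) xk) ?(dotpC xk (g 1)) ?(dotpC (z 2) (g 1)).
  lra.
have vk : valid k.+1 := valid_prev k.+1 isT vj.
have [h2 _] := step_at k.+1 isT vj.
have h1 := first_order k.+2 vj.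
have h3 := gap_le k.+1 vk.
have h4 := h2 (z k.+3).
have h5 := mulr_ge0 (sqr_ge0 rho) (dotp_ge0 (z k.+3 - z k.+2)).
have h6 : rho * dotp (xk - z k.+3) (xk - z k.+3) <= f xk - ft k.+1 (z k.+2) - dotp (rho *: (xk - z k.+2)) (z k.+3 - z k.+2).
  by lra.
have h7 := ler_wpM2l (ltW (mulr_gt0 (ltr0Sn R 1) hr)) h6.
move: h3 h5 h7; rewrite /gap /vv !nrm2 !dotpE.
rewrite ?(dotpC (z k.+2) xk) ?(dotpC (z k.+3) xk) ?(dotpC (z k.+3) (z k.+2)).
move=> h3 h5 h7. nra.
Qed.

Lemma gap_pos j : valid j -> 0 < gap j.
Proof. move=> /gap_ge h; exact: lt_le_trans hD h. Qed.

Lemma sq_le (u : 'rV[R]_n) G : nrm u <= G -> dotp u u <= G ^+ 2.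
Proof.
move=> h; rewrite -nrm2; have := nrm_ge0 u => h0.
by rewrite ler_pXn2r // ?nnegrE //; apply: le_trans h.
Qed.

Lemma rec j G : (1 <= j)%N -> valid j.+1 -> nrm (g 1) <= G -> nrm (g j.+1) <= G ->
  8 * G ^+ 2 * gap j.+1 <= 8 * G ^+ 2 * gap j - (1 - beta) ^+ 2 * rho * gap j ^+ 2.
Proof.
move=> j1 vj1 G1 Gj.
have vj := valid_prev j j1 vj1.
have GG1 : gg1 <= G ^+ 2 by apply: sq_le.
have GGj := sq_le _ _ Gj.
have gp := gap_pos j vj.
have gl := gap_le j vj.
have G2p : 0 < G ^+ 2.
  apply: lt_le_trans GG1; apply: lt_le_trans gl; apply: mulr_gt0 => //.
  by apply: mulr_gt0.
have hl := loop_at j j1 vj1.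
have [h2 h3] := step_at j j1 vj1.
have sb := s_bound j vj.
have b0 : 0 <= 1 - beta by case/andP: hb => _ ?; rewrite subr_ge0 ltW.
pose lam := (1 - beta) * rho * gap j / (4 * G ^+ 2).
have lam0 : 0 <= lam.
  apply: divr_ge0; first by rewrite !mulr_ge0 // ltW.
  by rewrite mulr_ge0 // ltW.
have lam1 : lam <= 1.
  rewrite /lam ler_pdivrMr; last by lra.
  have : (1 - beta) * (rho * gap j) <= 1 * (rho * gap j).
    apply: ler_wpM2r; first by rewrite mulr_ge0 // ltW.
    by case/andP: hb => ? _; lra.
  lra.
pose E := f (z j.+1) + m / 2 * nrm (z j.+1 - xk) ^+ 2 + rho / 2 * nrm (z j.+1 - xk) ^+ 2 - vv j.
have hE : (1 - beta) * gap j <= E.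
  have r0 : 0 <= (1 - beta) * (rho / 2 * nrm (z j.+1 - xk) ^+ 2).
    by rewrite mulr_ge0 // mulr_ge0 ?sqr_ge0 // divr_ge0 // ltW.
  move: hl; rewrite /loop_cont /E /gap /vv => hl.
  have e : beta * (f xk - ft j (z j.+1)) = beta * (f xk - (ft j (z j.+1) + rho / 2 * nrm (z j.+1 - xk) ^+ 2)) + beta * (rho / 2 * nrm (z j.+1 - xk) ^+ 2) by ring.
  rewrite e in hl.
  lra.
have st1 : lam * E + lam * dotp (g j.+1 + rho *: (z j.+1 - xk)) (z j.+2 - z j.+1)
    + rho / 2 * dotp (z j.+2 - z j.+1) (z j.+2 - z j.+1) <= vv j.+1 - vv j.
  have m2 : (1 - lam) * (ft j (z j.+1) + dotp (rho *: (xk - z j.+1)) (z j.+2 - z j.+1))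
     <= (1 - lam) * ft j.+1 (z j.+2) by apply: ler_wpM2l (h2 _); lra.
  have m3 := ler_wpM2l lam0 (h3 (z j.+2)).
  move: m2 m3; rewrite /E /vv !nrm2 !dotpE.
  rewrite ?(dotpC (z j.+1) xk) ?(dotpC (z j.+2) xk) ?(dotpC (g j.+1) xk)
          ?(dotpC (z j.+2) (z j.+1)) ?(dotpC (g j.+1) (z j.+1)) ?(dotpC (g j.+1) (z j.+2)).
  move=> m2 m3; lra.
have ql := quad_lower (z j.+2 - z j.+1) (g j.+1 + rho *: (z j.+1 - xk)) rho lam hr.
have wb := ww_bound (g j.+1) (z j.+1 - xk) rho.
have ed : dotp (z j.+1 - xk) (z j.+1 - xk) = dotp (xk - z j.+1) (xk - z j.+1).
  by rewrite -opprB dotpNl dotpNr opprK.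
have st2 : 2 * rho * (lam * E + lam * dotp (g j.+1 + rho *: (z j.+1 - xk)) (z j.+2 - z j.+1)
    + rho / 2 * dotp (z j.+2 - z j.+1) (z j.+2 - z j.+1)) <= 2 * rho * (vv j.+1 - vv j).
  by apply: ler_wpM2l => //; rewrite mulr_ge0 // ltW.
apply: (@fin_scalar R rho (G ^+ 2) (gap j) (gap j.+1) lam E (dotp (g j.+1 + rho *: (z j.+1 - xk)) (g j.+1 + rho *: (z j.+1 - xk))) (1 - beta) hr G2p (ltW gp) b0 (erefl lam) hE).
  rewrite ed in wb; lra.
rewrite /gap; lra.
Qed.

Lemma bound T G : (1 <= T)%N -> valid T -> (forall j, (1 <= j <= T)%N -> nrm (g j) <= G) ->
  T%:R <= 8 * G ^+ 2 / ((1 - beta) ^+ 2 * rho * (f xk - moreau f (m + rho) xk)).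
Proof.
move=> T1 vT hG.
have G1 : nrm (g 1) <= G by apply: hG; rewrite /= T1.
have v1 : valid 1 by split => // -[|i].
have gl1 := gap_le 1 v1.
have gp1 := gap_pos 1 v1.
have GG1 : gg1 <= G ^+ 2 by apply: sq_le.
have G2p : 0 < G ^+ 2.
  apply: lt_le_trans GG1; apply: lt_le_trans gl1; apply: mulr_gt0 => //.
  by apply: mulr_gt0.
have c0 : 0 < (1 - beta) ^+ 2.
  by case/andP: hb => _ h; apply: exprn_gt0; rewrite subr_gt0.
have c1 : (1 - beta) ^+ 2 <= 1.
  by case/andP: hb => h h'; rewrite expr_le1 //; lra.
have vle j : (1 <= j <= T)%N -> valid j.
  move=> /andP [j1 jT]; split => // i /andP [i1 ij]; case: vT => _ hl; apply: hl.
  by rewrite i1 /=; apply: leq_trans ij jT.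
pose P := (1 - beta) ^+ 2 * rho.
have P0 : 0 <= P by rewrite mulr_ge0 // ltW.
have XK j : (1 <= j <= T)%N -> P * gap j <= 8 * G ^+ 2.
  move=> hj; have := gap_le j (vle j hj) => h.
  have : P * gap j <= rho * gap j.
    apply: ler_wpM2r; first exact: ltW (gap_pos j (vle j hj)).
    rewrite /P -[leRHS]mul1r; apply: ler_wpM2r => //; exact: ltW.
  lra.
have ind : forall j, (1 <= j <= T)%N -> j%:R * (P * gap j) <= 8 * G ^+ 2.
  elim=> [//|j IH hj].
  case: j IH hj => [_ _|j IH hj]; first by rewrite mul1r XK.
  have hj' : (1 <= j.+1 <= T)%N by case/andP: hj => _ h; rewrite /= ltnW.
  have hr' := rec j.+1 G isT (vle j.+2 hj) G1 (hG j.+2 hj).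
  rewrite -natr1 mulrA.
  apply: (@step_scalar R _ _ (gap j.+1)).
  - by rewrite mulr_gt0.
  - exact: P0.
  - exact: ler0n.
  - by apply: mulr_ge0 => //; apply: ltW; apply: (gap_pos j.+1 (vle j.+1 hj')).
  - exact: XK.
  - exact: IH hj'.
  - by move: hr'; rewrite /P.
have := ind T; rewrite T1 leqnn => /(_ isT).
have gT := gap_ge T vT.
have PD : 0 < P * (f xk - moreau f (m + rho) xk) by rewrite mulr_gt0 // mulr_gt0.
rewrite ler_pdivlMr; last by rewrite -/P.
move=> h; apply: le_trans h.
rewrite -/P; apply: ler_wpM2l; first exact: ler0n.
by apply: ler_wpM2l.
Qed.

Lemma gbound : exists Gb, forall j, valid j -> nrm (g j) <= Gb.
Proof.
have [sub1 _ _ step] := run.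
have [K hK] := convex_bounded (fun x => f x + m / 2 * nrm x ^+ 2) xk (2 * (gg1 / rho ^+ 2) + 2) hwc.
pose L := f xk - gg1 / 2 - (1 + m) / 2 * (gg1 / rho ^+ 2).
pose Bv := K - L + m / 2.
exists (1 + gg1 + (2 * Bv ^+ 2 + 2 * (m ^+ 2 * (gg1 / rho ^+ 2)))).
case=> [[//]|[|k]] vj.
  apply: le_trans (le_1sq _) _; rewrite nrm2 -!addrA lerD2l lerDl.
  apply: addr_ge0; apply: mulr_ge0 => //; first exact: sqr_ge0.
  apply: mulr_ge0; first exact: sqr_ge0.
  by apply: divr_ge0; [exact: dotp_ge0 | exact: sqr_ge0].
have vk : valid k.+1 := valid_prev k.+1 isT vj.
have hl : forall i, (1 <= i < k.+2)%N -> loop_cont f m beta xk ft z i by case: vj.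
have [subv _] := step k.+1 isT (fun i hi => hl i hi).
set v := g k.+2 - m *: (z k.+2 - xk) in subv.
have sb := s_bound k.+1 vk.
have rp : 0 < rho ^+ 2 by apply: exprn_gt0.
have dd : dotp (z k.+2 - xk) (z k.+2 - xk) <= gg1 / rho ^+ 2.
  have ed : dotp (z k.+2 - xk) (z k.+2 - xk) = dotp (xk - z k.+2) (xk - z k.+2).
    by rewrite -opprB dotpNl dotpNr opprK.
  by rewrite ler_pdivlMr // mulrC ed.
have fz : L <= f (z k.+2).
  have := sub1 (z k.+2); rewrite nrm2.
  have := dotp_lb (g 1) (z k.+2 - xk) => h1 h2.
  have : m / 2 * dotp (z k.+2 - xk) (z k.+2 - xk) <= m / 2 * (gg1 / rho ^+ 2).
    by apply: ler_wpM2l => //; rewrite divr_ge0.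
  move: dd; rewrite /L /gg1 in h1 *; lra.
have vb : dotp v v <= Bv ^+ 2.
  have [v0|vn] := eqVneq (nrm v) 0.
    rewrite -nrm2 v0 expr0n /=; exact: sqr_ge0.
  have vp : 0 < nrm v by rewrite lt_def vn nrm_ge0.
  pose t := (nrm v)^-1.
  have vn0 : nrm v != 0 by [].
  have e1 : dotp v (t *: v) = nrm v.
    by rewrite dotpZr -nrm2 /t; field.
  have e2 : dotp (t *: v) (t *: v) = 1.
    by rewrite dotpZl dotpZr -nrm2 /t; field.
  have yz : z k.+2 + t *: v - z k.+2 = t *: v by rewrite addrAC subrr add0r.
  have := subv (z k.+2 + t *: v).
  rewrite yz nrm2 e1 e2 => h.
  have hy : dotp (z k.+2 + t *: v - xk) (z k.+2 + t *: v - xk) <= 2 * (gg1 / rho ^+ 2) + 2.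
    rewrite addrAC.
    have := ww_bound (z k.+2 - xk) (t *: v) 1.
    rewrite scale1r expr1n mul1r e2 => h'.
    lra.
  have := hK _ hy.
  have : 0 <= m / 2 * nrm (z k.+2 + t *: v) ^+ 2 by rewrite mulr_ge0 ?sqr_ge0 // divr_ge0.
  move=> h0 hk.
  have nb : nrm v <= Bv by rewrite /Bv; lra.
  rewrite -nrm2; rewrite ler_pXn2r //; rewrite nnegrE ?nrm_ge0 //.
  exact: le_trans (nrm_ge0 _) nb.
have ge : g k.+2 = v + m *: (z k.+2 - xk) by rewrite /v subrK.
apply: le_trans (le_1sq _) _; rewrite nrm2 ge.
have wb := ww_bound v (z k.+2 - xk) m.
have : m ^+ 2 * dotp (z k.+2 - xk) (z k.+2 - xk) <= m ^+ 2 * (gg1 / rho ^+ 2).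
  by apply: ler_wpM2l => //; exact: sqr_ge0.
have : 0 <= gg1 by exact: dotp_ge0.
lra.
Qed.

End Main.

Theorem mainTheorem8 (R : realType) (n : nat) (m : R) (f : 'rV[R]_n -> R)
    (beta rho : R) (xk : 'rV[R]_n)
    (g : nat -> 'rV[R]_n) (ft : nat -> 'rV[R]_n -> R) (z : nat -> 'rV[R]_n) :
  0 <= m -> weakly_convex m f ->
  0 < beta < 1 -> 0 < rho ->
  prox_descent_run f m beta rho xk g ft z ->
  0 < f xk - moreau f (m + rho) xk ->
  exists T : nat,
    [/\ (1 <= T)%N,
        (forall j : nat, (1 <= j < T)%N -> loop_cont f m beta xk ft z j),
        ~ loop_cont f m beta xk ft z T &
        T%:R <= 8 * (\big[Num.max/0]_(1 <= j < T.+1) nrm (g j)) ^+ 2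
                / ((1 - beta) ^+ 2 * rho * (f xk - moreau f (m + rho) xk))].
Proof.
move=> hm wc hb hr run hD.
have [Gb hGb] := @gbound R n m f beta rho xk g ft z hm hr run wc.
pose vld := valid R n m f beta xk ft z.
have v1 : vld 1 by split => // -[|i].
case: (pselect (exists T, (1 <= T)%N /\ vld T /\ ~ loop_cont f m beta xk ft z T)) =>
    [[T [T1 [vT nl]]]|nex].
  exists T; split => //.
    by move=> j hj; case: vT => _; apply.
  apply: (@bound R n m f beta rho xk g ft z hb hr run hD T _ T1 vT).
  move=> j /andP [j1 jT].
  have hj : j \in index_iota 1 T.+1 by rewrite mem_index_iota j1 ltnS jT.
  exact: (@le_bigmax_seq _ R _ (index_iota 1 T.+1) 0 j xpredT (fun j => nrm (g j)) hj isT).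
exfalso.
have allv : forall k, vld k.+1.
  elim=> [//|k IH]; split => // i /andP [i1 ik].
  rewrite ltnS leq_eqVlt in ik; case/orP: ik => [/eqP ->|ik].
    case: (pselect (loop_cont f m beta xk ft z k.+1)) => // nl.
    by exfalso; apply: nex; exists k.+1.
  by case: IH => _ h; apply: h; rewrite i1 ik.
pose B := 8 * Gb ^+ 2 / ((1 - beta) ^+ 2 * rho * (f xk - moreau f (m + rho) xk)).
have B0 : 0 <= B.
  apply: divr_ge0; first by apply: mulr_ge0 => //; exact: sqr_ge0.
  apply: mulr_ge0; last exact: ltW.
  by apply: mulr_ge0; [exact: sqr_ge0 | exact: ltW].
have kB := archi_boundP B0.
set k := Num.Def.archi_bound B in kB.
have := @bound R n m f beta rho xk g ft z hb hr run hD k.+1 Gb isT (allv k).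
have hG : forall j, (1 <= j <= k.+1)%N -> nrm (g j) <= Gb.
  by move=> [|j] // _; apply: hGb; apply: allv.
move=> /(_ hG) hk.
have : (k%:R : R) <= k.+1%:R by rewrite ler_nat.
rewrite -/B in hk.
move=> h; have := lt_le_trans kB (le_trans h hk); rewrite ltxx.
by [].
Qed.
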